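(* Let $n\ge 2$ and let $k_n$ be the maximum diameter of a connected component of the cyclic shift graph $K({\mathsf{plac}}_n)$. Then $n-1\le k_n\le 2n-3$.
   Context: Let $\mathcal{A}=\{1<2<3<\cdots\}$ be the ordered alphabet of positive integers and $\mathcal{A}_n=\{1<2<\cdots<n\}$. For a monoid $M$ and $s,t\in M$, write $s\sim t$ if there exist $x,y\in M$ with $s=xy$ and $t=yx$ (a cyclic shift); $\sim^*$ is the reflexive–transitive closure of $\sim$. The cyclic shift graph $K(M)$ is the undirected graph with vertex set $M$ and an edge between $s$ and $t$ iff $s\sim t$; its connected components are the $\sim^*$-classes, and distances/diameters are graph distances in $K(M)$. The evaluation of a word $w$ is the tuple $(|w|_a)_{a}$ giving the number of occurrences of each letter $a$; all monoids considered are defined by presentations whose defining relations preserve evaluation, so the evaluation of an element is well defined, and $s\equiv_{\mathrm{ev}} t$ means $s$ and $t$ have the same evaluation. The plactic monoid of rank $n$, ${\mathsf{plac}}_n$, is $\mathcal{A}_n^*$ modulo the congruence generated by the Knuth relations $acb=cab$ for letters $a\le b<c$ and $bac=bca$ for letters $a<b\le c$ (all letters in $\mathcal{A}_n$). It is known (and may be used) that connected components of $K({\mathsf{plac}}_n)$ are exactly the $\equiv_{\mathrm{ev}}$-classes, and that elements of ${\mathsf{plac}}_n$ correspond bijectively to semistandard Young tableaux with entries in $\mathcal{A}_n$ via Schensted insertion. *)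

(* Defs.v *)
From Stdlib Require Import Relations.
From mathcomp Require Import all_boot.
Set Implicit Arguments. Unset Strict Implicit. Unset Printing Implicit Defensive.

Definition word_n (n : nat) (w : seq nat) : bool :=
  all (fun a => (1 <= a) && (a <= n)) w.

Definition knuth_step (n : nat) (u v : seq nat) : Prop :=
  exists (x y : seq nat) (a b c : nat),
    word_n n x /\ word_n n y /\ word_n n [:: a; b; c] /\
    ((a <= b < c /\ u = x ++ [:: a; c; b] ++ y /\ v = x ++ [:: c; a; b] ++ y) \/
     (a < b <= c /\ u = x ++ [:: b; a; c] ++ y /\ v = x ++ [:: b; c; a] ++ y)).

(* The plactic congruence on A_n^* : the congruence generated by the Knuth
   relations, i.e. the reflexive-symmetric-transitive closure of the
   contextual moves. Elements of plac_n are its classes. *)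
Definition plac_eq (n : nat) : relation (seq nat) :=
  clos_refl_sym_trans (seq nat) (knuth_step n).

(* Cyclic shift s ~ t in plac_n, lifted to representative words:
   [u] = [x][y] and [v] = [y][x] for some x, y in plac_n. *)
Definition cyc (n : nat) (u v : seq nat) : Prop :=
  exists x y : seq nat, word_n n x /\ word_n n y /\
    plac_eq n u (x ++ y) /\ plac_eq n v (y ++ x).

(* reach n k u v : the classes [u], [v] are joined by a path of length
   at most k in K(plac_n). *)
Fixpoint reach (n k : nat) (u v : seq nat) : Prop :=
  match k with
  | 0 => plac_eq n u v
  | S k' => reach n k' u v \/ exists w, word_n n w /\ reach n k' u w /\ cyc n w v
  end.

Definition connected (n : nat) (u v : seq nat) : Prop :=
  clos_refl_trans (seq nat) (cyc n) u v.

Definition dist (n : nat) (u v : seq nat) (d : nat) : Prop :=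
  reach n d u v /\ forall d', reach n d' u v -> d <= d'.

Definition comp_diameter (n : nat) (u : seq nat) (D : nat) : Prop :=
  (forall v w, word_n n v -> word_n n w -> connected n u v -> connected n u w ->
     exists d, dist n v w d /\ d <= D) /\
  (exists v w, word_n n v /\ word_n n w /\ connected n u v /\ connected n u w /\
     dist n v w D).

Definition max_comp_diameter (n K : nat) : Prop :=
  (forall u, word_n n u -> exists D, comp_diameter n u D) /\
  (forall u D, word_n n u -> comp_diameter n u D -> D <= K) /\
  (exists u, word_n n u /\ comp_diameter n u K).

(* Main.v *)
Require Import Defs.
From Stdlib Require Import Relations Classical.
From mathcomp Require Import all_boot zify.
Set Implicit Arguments. Unset Strict Implicit. Unset Printing Implicit Defensive.

Section S.
Variable n : nat.

Lemma word_cat s t : word_n n (s ++ t) = word_n n s && word_n n t.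
Proof. by rewrite /word_n all_cat. Qed.

Lemma plac_refl u : plac_eq n u u. Proof. exact: rst_refl. Qed.
Lemma plac_sym u v : plac_eq n u v -> plac_eq n v u. Proof. exact: rst_sym. Qed.
Lemma plac_trans u v w : plac_eq n u v -> plac_eq n v w -> plac_eq n u w.
Proof. exact: rst_trans. Qed.

Lemma plac_cat l r u v : word_n n l -> word_n n r -> plac_eq n u v ->
  plac_eq n (l ++ u ++ r) (l ++ v ++ r).
Proof.
move=> Wl Wr; elim=> {u v}.
- move=> u v [x [y [a [b [c [Wx [Wy [Wabc H]]]]]]]].
  apply: rst_step; exists (l ++ x), (y ++ r), a, b, c.
  rewrite !word_cat Wl Wx Wy Wr; do 3 split => //.
  case: H => [[H1 [-> ->]]|[H1 [-> ->]]]; [left|right]; rewrite !catA; by split.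
- move=> u; exact: rst_refl.
- move=> u v _ H; exact: rst_sym.
- move=> u v w _ H1 _ H2; exact: rst_trans H1 H2.
Qed.

Lemma plac_catl l u v : word_n n l -> plac_eq n u v -> plac_eq n (l ++ u) (l ++ v).
Proof. move=> Wl H; have := plac_cat Wl (isT : word_n n [::]) H; by rewrite !cats0. Qed.

Lemma plac_catr r u v : word_n n r -> plac_eq n u v -> plac_eq n (u ++ r) (v ++ r).
Proof. move=> Wr H; exact: (plac_cat (isT : word_n n [::]) Wr H). Qed.

Lemma K1 a b c : word_n n [:: a; b; c] -> a <= b < c ->
  plac_eq n [:: a; c; b] [:: c; a; b].
Proof.
move=> W H; apply: rst_step; exists [::], [::], a, b, c; do 3 split => //.
by left; rewrite cats0.
Qed.

Lemma K2 a b c : word_n n [:: a; b; c] -> a < b <= c ->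
  plac_eq n [:: b; a; c] [:: b; c; a].
Proof.
move=> W H; apply: rst_step; exists [::], [::], a, b, c; do 3 split => //.
by right; rewrite cats0.
Qed.

Lemma subA R2 p x : sorted leq (p :: R2) -> x < p -> word_n n (x :: p :: R2) ->
  plac_eq n (p :: R2 ++ [:: x]) (p :: x :: R2).
Proof.
elim: R2 p => [|r R2 IH] p /= Hs Hxp W; first exact: plac_refl.
move/andP: Hs => [Hpr Hs].
move: W => /= /and4P [Wx Wp Wr WR].
apply: plac_trans (_ : plac_eq n (p :: r :: x :: R2) _).
  apply: (plac_catl (l := [:: p])) => //=; first by rewrite Wp.
  apply: IH => //; first by lia.
  by rewrite /= Wx Wr WR.
have := plac_catr (r := R2) WR (plac_sym (K2 (a := x) (b := p) (c := r) _ _)).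
by apply; rewrite /= ?Wx ?Wp ?Wr //; lia.
Qed.

Lemma subB R1 t b : sorted leq R1 -> all (fun s => s <= t) R1 -> t < b ->
  word_n n (t :: b :: R1) -> plac_eq n (R1 ++ [:: b; t]) (b :: R1 ++ [:: t]).
Proof.
elim: R1 => [|s R1 IH] /= Hs Ht Htb W; first exact: plac_refl.
move: Ht => /andP [Hst Ht].
move: W => /= /and4P [Wt Wb Ws WR].
have HsR : all (leq s) R1 by apply: order_path_min => //; exact: leq_trans.
have Hs' : sorted leq R1 by move: Hs; case: (R1) => //= ? ? /andP[].
apply: plac_trans (_ : plac_eq n (s :: b :: R1 ++ [:: t]) _).
  apply: (plac_catl (l := [:: s])) => //=; first by rewrite Ws.
  by apply: IH => //; rewrite /= Wt Wb WR.
case E: (R1 ++ [:: t]) => [|r z]; first by case: (R1) E.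
have Hr : r \in R1 ++ [:: t] by rewrite E mem_head.
have Hsr : s <= r.
  move: Hr; rewrite mem_cat => /orP[/(allP HsR)//|]; by rewrite inE => /eqP ->.
have Hrt : r <= t.
  move: Hr; rewrite mem_cat => /orP[/(allP Ht)//|]; by rewrite inE => /eqP ->.
have Wr : (1 <= r <= n).
  move: Hr; rewrite mem_cat => /orP[/(allP WR)//|]; by rewrite inE => /eqP ->.
have Wz : word_n n z.
  have : word_n n (R1 ++ [:: t]) by rewrite word_cat WR /= Wt.
  by rewrite E => /andP[].
have := plac_catr (r := z) Wz (K1 (a := s) (b := r) (c := b) _ _).
move=> H; apply: H; rewrite /= ?Ws ?Wr ?Wb //; lia.
Qed.

Lemma RI R1 b R2 x : sorted leq R1 -> all (fun s => s <= x) R1 -> x < b ->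
  sorted leq (b :: R2) -> word_n n (x :: b :: R1 ++ R2) ->
  plac_eq n (R1 ++ b :: R2 ++ [:: x]) (b :: R1 ++ x :: R2).
Proof.
move=> S1 H1 Hxb S2 W.
move: W => /= /and3P [Wx Wb]; rewrite word_cat => /andP[W1 W2].
apply: plac_trans (_ : plac_eq n (R1 ++ b :: x :: R2) _).
  apply: plac_catl => //; apply: subA => //; by rewrite /= Wx Wb W2.
have := plac_catr (r := R2) W2 (subB S1 H1 Hxb _).
rewrite -!catA /= -catA /=; move=> H; apply: H; by rewrite Wx Wb W1.
Qed.

End S.

Lemma sorted_ins s x t : sorted leq s -> all (fun a => a <= x) s -> sorted leq (x :: t) ->
  sorted leq (s ++ x :: t).
Proof.
case: s => [|a s] Hs Hall Hxt; first by [].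
rewrite /= cat_path; rewrite /= in Hs; rewrite Hs /=; rewrite /= in Hxt; rewrite Hxt andbT.
exact: (allP Hall (last a s) (mem_last a s)).
Qed.

Section S.
Variable n : nat.

Lemma GI B Q x : sorted leq (Q ++ B) -> all (fun s => s <= x) Q -> word_n n (x :: Q ++ B) ->
 sorted leq (Q ++ B ++ [:: x]) \/ exists b B', b \in B /\ sorted leq (Q ++ B') /\
   perm_eq (b :: B') (B ++ [:: x]) /\ plac_eq n (Q ++ B ++ [:: x]) (b :: Q ++ B').
Proof.
elim: B Q => [|y B IH] Q HS HQ W.
  left; rewrite cats0 in HS; exact: sorted_ins.
have SQ : sorted leq Q by apply: subseq_sorted HS; [exact: leq_trans| exact: prefix_subseq].
have SyB : sorted leq (y :: B) by apply: subseq_sorted HS; [exact: leq_trans| exact: suffix_subseq].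
case: (ltnP x y) => Hxy.
  right; exists y, (x :: B); split; first exact: mem_head.
  split; first apply: sorted_ins => //=.
    move: SyB; case: (B) => [|z B0] //= /andP[Hyz ->]; rewrite andbT.
    exact: leq_trans (ltnW Hxy) Hyz.
  split; first by rewrite perm_cons -[x :: B]/([:: x] ++ B) (perm_catC [:: x] B).
  apply: RI => //.
  move: W; rewrite /= !word_cat => /and3P[-> -> /= /andP[-> ->]]; by [].
have HQ' : all (fun s => s <= x) (Q ++ [:: y]) by rewrite all_cat HQ /= Hxy.
have := IH (Q ++ [:: y]); rewrite -!catA /= => /(_ HS HQ' W) [L|].
  by left.
move=> [b [B' [Hb [HS' [Hp Hpl]]]]]; move: HS' Hpl; rewrite -!catA /= => HS' Hpl.
right; exists b, (y :: B').
split; first by rewrite inE Hb orbT.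
split; first by [].
split; last by [].
by rewrite -[b :: y :: B']/([:: b] ++ [:: y] ++ B') perm_catCA /= perm_cons.
Qed.

End S.

Section S.
Variable n : nat.

Lemma L m P : 1 <= m -> m <= n -> word_n n P -> all (fun a => a < m) P -> sorted leq P ->
  forall w, word_n n w -> all (fun a => m <= a) w ->
  exists A B, word_n n A /\ word_n n B /\ all (fun a => m < a) A /\ all (fun a => m < a) B /\
    sorted leq (P ++ nseq (count_mem m w) m ++ B) /\
    plac_eq n (P ++ w) (A ++ P ++ nseq (count_mem m w) m ++ B).
Proof.
move=> Hm1 Hmn WP HPm SP.
elim/last_ind => [|w x IH].
  move=> _ _; exists [::], [::]; do 4 split => //; rewrite /= cats0 //; split => //.
  exact: plac_refl.
rewrite -cats1 word_cat all_cat /= !andbT => /andP[Ww Wx] /andP[Hw Hx].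
have [A [B [WA [WB [HA [HB [HS Hpl]]]]]]] := IH Ww Hw.
set c := count_mem m w in HS Hpl.
set Q := P ++ nseq c m.
have HS' : sorted leq (Q ++ B) by rewrite /Q -catA.
have HQ : all (fun s => s <= x) Q.
  rewrite /Q all_cat; apply/andP; split.
    apply/allP => z /(allP HPm) /= Hz; lia.
  by apply/allP => z; rewrite mem_nseq => /andP[_ /eqP ->].
have Wnm : word_n n (nseq c m) by apply/allP => z; rewrite mem_nseq => /andP[_ /eqP ->]; lia.
have WQ : word_n n Q by rewrite /Q word_cat WP Wnm.
have W : word_n n (x :: Q ++ B) by rewrite /= Wx word_cat WQ WB.
have Hpl1 : plac_eq n (P ++ w ++ [:: x]) (A ++ (Q ++ B ++ [:: x])).
  have Wx1 : word_n n [:: x] by rewrite /= Wx.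
  by move: (plac_catr Wx1 Hpl); rewrite /Q -!catA.
rewrite count_cat /= addn0.
have [Exm|Nxm] := eqVneq x m.
- subst x; have -> : count_mem m w + true = c.+1 by rewrite addn1.
  have Hc : nseq c.+1 m = nseq c m ++ [:: m] by rewrite -addn1 nseqD.
  rewrite Hc.
  case: (GI HS' HQ W) => [L|[b [B' [Hb [HSB [Hp Hpl2]]]]]].
    clear Hpl W; case: B HB HS HS' WB Hpl1 L => [|z B0] HB HS HS' WB Hpl1 L.
      exists A, [::]; do 4 split => //; split.
        by move: L; rewrite /Q -!catA.
      by move: Hpl1; rewrite /Q -!catA.
    exfalso.
    have : sorted leq (z :: B0 ++ [:: m]).
      apply: subseq_sorted L; [exact: leq_trans| exact: suffix_subseq].
    move=> /= /(order_path_min leq_trans); rewrite all_cat /= andbT => /andP[_ Hzm].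
    move: HB => /= /andP[Hz _]; by rewrite ltnNge Hzm in Hz.
  have Hbm : m < b by apply: (allP HB).
  have Hall : all (fun a => m <= a) (b :: B').
    rewrite (perm_all _ Hp) all_cat /= leqnn !andbT; apply/allP => z /(allP HB) /=; exact: ltnW.
  have HmB' : m \in B'.
    have : m \in b :: B' by rewrite (perm_mem Hp) mem_cat mem_head orbT.
    rewrite inE => /orP[/eqP E|//]; by rewrite E ltnn in Hbm.
  case: B' HSB Hp Hpl2 Hall HmB' => [|h B''] // HSB Hp Hpl2 Hall HmB'.
  have Sh : sorted leq (h :: B'') by apply: subseq_sorted HSB; [exact: leq_trans| exact: suffix_subseq].
  have Hh : h = m.
    move: Hall => /= /and3P[_ Hmh _].
    move: HmB'; rewrite inE => /orP[/eqP->//|Hin].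
    have := allP (order_path_min leq_trans Sh) _ Hin => /= Hhm; apply/eqP; by rewrite eqn_leq Hhm Hmh.
  subst h.
  have Hp' : perm_eq (b :: B'') B.
    rewrite -(perm_cons m) -[m :: b :: B'']/([:: m] ++ [:: b] ++ B'') perm_catCA /=.
    apply: (perm_trans Hp); by rewrite perm_catC.
  exists (A ++ [:: b]), B''.
  have Wb : word_n n (b :: B'') by rewrite /word_n (perm_all _ Hp').
  have Gb : all (fun a => m < a) (b :: B'') by rewrite (perm_all _ Hp').
  move: Wb Gb => /= /andP[Wb WB''] /andP[_ GB''].
  do 4 (split; first by rewrite ?word_cat ?all_cat /= ?WA ?Wb ?HA ?Hbm).
  split; first by move: HSB; rewrite /Q -!catA.
  apply: plac_trans Hpl1 _.
  have := plac_catl WA Hpl2; by rewrite /Q -!catA.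
- have -> : count_mem m w + false = c by rewrite addn0.
  have Hxm : m < x by rewrite ltn_neqAle eq_sym Nxm Hx.
  case: (GI HS' HQ W) => [L|[b [B' [Hb [HSB [Hp Hpl2]]]]]].
    exists A, (B ++ [:: x]).
    do 4 (split; first by rewrite ?word_cat ?all_cat /= ?WA ?WB ?Wx ?HA ?HB ?Hxm).
    split; first by move: L; rewrite /Q -!catA.
    by move: Hpl1; rewrite /Q -!catA.
  have Wb : word_n n (b :: B') by rewrite /word_n (perm_all _ Hp) -/(word_n n (B ++ [:: x])) word_cat WB /= Wx.
  have Gb : all (fun a => m < a) (b :: B') by rewrite (perm_all _ Hp) all_cat HB /= Hxm.
  move: Wb Gb => /= /andP[Wb WB'] /andP[Hbm GB'].
  exists (A ++ [:: b]), B'.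
  do 4 (split; first by rewrite ?word_cat ?all_cat /= ?WA ?Wb ?HA ?Hbm).
  split; first by move: HSB; rewrite /Q -!catA.
  apply: plac_trans Hpl1 _.
  have := plac_catl WA Hpl2; by rewrite /Q -!catA.
Qed.

End S.

Section S.
Variable n : nat.

Lemma knuth_perm u v : knuth_step n u v -> perm_eq u v.
Proof.
move=> [x [y [a [b [c [_ [_ [_ H]]]]]]]].
case: H => [[_ [-> ->]]|[_ [-> ->]]]; rewrite perm_cat2l perm_cat2r.
  by rewrite -[[:: a; c; b]]/([:: a] ++ [:: c] ++ [:: b]) perm_catCA.
by rewrite perm_cons -[[:: a; c]]/([:: a] ++ [:: c]) perm_catC.
Qed.

Lemma plac_perm u v : plac_eq n u v -> perm_eq u v.
Proof.
elim=> {u v}.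
- exact: knuth_perm.
- move=> u; exact: perm_refl.
- move=> u v _ H; by rewrite perm_sym.
- move=> u v w _ H1 _ H2; exact: perm_trans H1 H2.
Qed.

Lemma cyc_perm u v : cyc n u v -> perm_eq u v.
Proof.
move=> [x [y [_ [_ [H1 H2]]]]].
apply: perm_trans (plac_perm H1) _; rewrite perm_catC perm_sym; exact: plac_perm.
Qed.

Lemma cyc_sym u v : cyc n u v -> cyc n v u.
Proof. move=> [x [y [Wx [Wy [H1 H2]]]]]; by exists y, x. Qed.

Lemma cyc_plac u u' v v' : plac_eq n u' u -> plac_eq n v v' -> cyc n u v -> cyc n u' v'.
Proof.
move=> Hu Hv [x [y [Wx [Wy [H1 H2]]]]]; exists x, y; do 2 split => //; split.
  exact: plac_trans Hu H1.
exact: plac_trans (plac_sym Hv) H2.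
Qed.

Lemma reach_mono a b u v : a <= b -> reach n a u v -> reach n b u v.
Proof.
move=> Hab H; elim: b Hab => [|b IH]; first by rewrite leqn0 => /eqP <-.
rewrite leq_eqVlt => /orP[/eqP <- //|Hab]; left; exact: IH.
Qed.

Lemma reach_plac_r a u v v' : reach n a u v -> plac_eq n v v' -> reach n a u v'.
Proof.
elim: a v v' => [|a IH] v v' /= H Hv; first exact: plac_trans H Hv.
case: H => [H|[w [Ww [H1 H2]]]]; first by left; exact: IH H Hv.
right; exists w; split => //; split => //; exact: cyc_plac (plac_refl _ _) Hv H2.
Qed.

Lemma reach_plac_l a u u' v : plac_eq n u' u -> reach n a u v -> reach n a u' v.
Proof.
elim: a v => [|a IH] v Hu /= H; first exact: plac_trans Hu H.
case: H => [H|[w [Ww [H1 H2]]]]; first by left; exact: IH Hu H.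
right; exists w; split => //; split => //; exact: IH Hu H1.
Qed.

Lemma reach_cons a u w v : word_n n u -> cyc n u w -> reach n a w v -> reach n a.+1 u v.
Proof.
move=> Wu Huw; elim: a v => [|a IH] v /= H.
  right; exists u; split => //; split; first exact: plac_refl.
  exact: cyc_plac (plac_refl _ _) H Huw.
case: H => [H|[z [Wz [H1 H2]]]].
  left; exact: IH.
right; exists z; split => //; split => //; exact: IH.
Qed.

Lemma reach_trans a b u w v : reach n a u w -> reach n b w v -> reach n (a + b) u v.
Proof.
move=> H1; elim: b v => [|b IH] v /= H2; first by rewrite addn0; exact: reach_plac_r H1 H2.
rewrite addnS /=; case: H2 => [H2|[z [Wz [H2 H3]]]].
  left; exact: IH.
right; exists z; split => //; split => //; exact: IH.
Qed.

Lemma reach_sym a u v : word_n n v -> reach n a u v -> reach n a v u.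
Proof.
elim: a u v => [|a IH] u v Wv /= H; first exact: plac_sym.
case: H => [H|[z [Wz [H1 H2]]]].
  left; exact: IH.
apply: reach_cons Wv (cyc_sym H2) _; exact: IH.
Qed.

Lemma reach_perm a u v : reach n a u v -> perm_eq u v.
Proof.
elim: a v => [|a IH] v /= H; first exact: plac_perm.
case: H => [H|[z [Wz [H1 H2]]]]; first exact: IH.
exact: perm_trans (IH _ H1) (cyc_perm H2).
Qed.

Lemma reach_conn a u v : word_n n u -> reach n a u v -> connected n u v.
Proof.
move=> Wu; elim: a v => [|a IH] v /= H.
  apply: rt_step; exists u, [::]; rewrite cats0 /=; do 2 split => //; split.
    exact: plac_refl.
  exact: plac_sym.
case: H => [H|[z [Wz [H1 H2]]]]; first exact: IH.
apply: rt_trans (IH _ H1) _; exact: rt_step.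
Qed.

Lemma conn_perm u v : connected n u v -> perm_eq u v.
Proof.
rewrite /connected; elim=> {u v}.
- move=> u v; exact: cyc_perm.
- move=> u; exact: perm_refl.
- move=> u v w _ H1 _ H2; exact: perm_trans H1 H2.
Qed.

End S.

Fixpoint Pk (u : seq nat) (k : nat) : seq nat :=
  if k is k'.+1 then Pk u k' ++ nseq (count_mem k'.+1 u) k'.+1 else [::].

Lemma Pk_all u k : all (fun a => 0 < a <= k) (Pk u k).
Proof.
elim: k => [|k IH] //=; rewrite all_cat; apply/andP; split.
  apply/allP => z /(allP IH) /andP[-> /= H]; exact: leqW.
by apply/allP => z; rewrite mem_nseq => /andP[_ /eqP ->] /=.
Qed.

Lemma path_nseq c x : path leq x (nseq c x).
Proof. by elim: c => //= c ->; rewrite leqnn. Qed.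

Lemma Pk_sorted u k : sorted leq (Pk u k).
Proof.
elim: k => [|k IH] //=.
case: (count_mem k.+1 u) => [|c]; first by rewrite cats0.
apply: sorted_ins => //=; last exact: path_nseq.
apply/allP => z /(allP (Pk_all u k)) /andP[_ H]; exact: leqW.
Qed.

Lemma Pk_perm u v k : perm_eq u v -> Pk u k = Pk v k.
Proof. move/permP => H; elim: k => [|k IH] //=; by rewrite IH H. Qed.

Lemma count_Pk u k j : k < j -> count_mem j (Pk u k) = 0.
Proof.
move=> Hkj; apply/count_memPn; apply/negP => Hin.
have := allP (Pk_all u k) _ Hin => /andP[_ H]; by rewrite leqNgt Hkj in H.
Qed.

Lemma all_n n A : word_n n A -> all (fun a => n.-1 < a) A -> A = nseq (size A) n.
Proof.
move=> W H; apply/all_pred1P; apply/allP => a Ha.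
have := allP W a Ha; have := allP H a Ha => /=; move=> H1 /andP[H2 H3].
apply/eqP; lia.
Qed.

Lemma arith1 a b a' b' : a + b = a' + b' -> a' <= a -> b' = b + (a - a').
Proof. lia. Qed.

Lemma arith2 n : 2 <= n -> (n - 2 < n.-1) * (n - 2 < n) * ((n.-1 == n) = false) *
  ((n - 2).+1 + (n - 2) = 2 * n - 3) * ((n - 2).+1 = n.-1) * (0 < n.-1).
Proof. move=> H; (repeat split); try lia; apply/eqP; lia. Qed.

Section S.
Variable n : nat.

Lemma chain k : k <= n -> forall u, word_n n u -> exists w, word_n n w /\
  all (fun a => k < a) w /\ reach n k u (Pk u k ++ w).
Proof.
elim: k => [|k IH] Hk u Wu.
  exists u; split => //; split; last exact: plac_refl.
  by apply/allP => z /(allP Wu) /andP[].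
have [w [Ww [Hw R]]] := IH (ltnW Hk) u Wu.
have Hp := reach_perm R.
set P := Pk u k in R Hp.
have WP : word_n n P.
  apply/allP => z /(allP (Pk_all u k)) /andP[-> /= H]; exact: leq_trans H (ltnW Hk).
have HPm : all (fun a => a < k.+1) P by apply/allP => z /(allP (Pk_all u k)) /andP[].
have [A [B [WA [WB [HA [HB [HS Hpl]]]]]]] :=
  L (isT : 0 < k.+1) Hk WP HPm (Pk_sorted u k) Ww Hw.
have Hc : count_mem k.+1 w = count_mem k.+1 u.
  by rewrite (permP Hp) count_cat count_Pk.
rewrite Hc in HS Hpl.
exists (B ++ A); split; first by rewrite word_cat WB WA.
split.
  rewrite all_cat; apply/andP; split; apply/allP => z.
    by move/(allP HB).
  by move/(allP HA).
right; exists (P ++ w); split; first by rewrite word_cat WP Ww.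
split => //.
exists A, (P ++ nseq (count_mem k.+1 u) k.+1 ++ B); split => //; split.
  rewrite !word_cat WP WB andbT; apply/allP => z; rewrite mem_nseq => /andP[_ /eqP ->].
  by rewrite /=; lia.
split => //.
rewrite /= -/P -!catA; exact: plac_refl.
Qed.

Lemma cyc_n i d b M : 1 <= n -> word_n n M ->
  cyc n (nseq (d + i) n ++ M ++ nseq b n) (nseq i n ++ M ++ nseq (b + d) n).
Proof.
move=> Hn WM.
have Wn : forall j, word_n n (nseq j n) by move=> j; apply/allP => z; rewrite mem_nseq => /andP[_ /eqP ->]; rewrite Hn leqnn.
exists (nseq d n), (nseq i n ++ M ++ nseq b n); split => //; split.
  by rewrite !word_cat Wn WM Wn.
split; first by rewrite nseqD -catA; exact: plac_refl.
by rewrite nseqD -!catA; exact: plac_refl.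
Qed.

Lemma upper u v : 2 <= n -> word_n n u -> word_n n v -> perm_eq u v ->
  reach n (2 * n - 3) u v.
Proof.
move=> Hn Wu Wv Huv.
have [[[[[F1 F2] F3] F4] Hm] H1] := arith2 Hn.
have Hn1 : 0 < n by apply: leq_trans _ Hn.
have Hk : n - 2 <= n by apply: leq_subr.
have [w [Ww [Hw R]]] := chain Hk Wu.
have [w' [Ww' [Hw' R']]] := chain Hk Wv.
rewrite -(Pk_perm _ Huv) in R'.
set P := Pk u (n - 2) in R R'.
have WP : word_n n P.
  apply/allP => z /(allP (Pk_all u (n - 2))) /andP[-> /= H]; exact: leq_trans H Hk.
have HPm : all (fun a => a < n.-1) P.
  apply/allP => z /(allP (Pk_all u (n - 2))) /andP[_ H]; by rewrite -Hm.
have H2 : n.-1 <= n by apply: leq_pred.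
have Hw1 : all (fun a => n.-1 <= a) w by rewrite -Hm.
have Hw1' : all (fun a => n.-1 <= a) w' by rewrite -Hm.
have [A [B [WA [WB [HA [HB [HS Hpl]]]]]]] := L H1 H2 WP HPm (Pk_sorted u _) Ww Hw1.
have [A' [B' [WA' [WB' [HA' [HB' [HS' Hpl']]]]]]] := L H1 H2 WP HPm (Pk_sorted u _) Ww' Hw1'.
have Hp := perm_trans (reach_perm R) (plac_perm Hpl).
have Hp' := perm_trans (reach_perm R') (plac_perm Hpl').
have Hc : count_mem n.-1 w = count_mem n.-1 w'.
  have E1 := permP (reach_perm R) (pred1 n.-1); have E2 := permP (reach_perm R') (pred1 n.-1).
  rewrite !count_cat (count_Pk _ F1) !add0n in E1 E2.
  by rewrite (permP Huv) E2 in E1.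
rewrite -Hc in HS' Hpl' Hp'.
set M := P ++ nseq (count_mem n.-1 w) n.-1.
have EA := all_n WA HA; have EB := all_n WB HB.
have EA' := all_n WA' HA'; have EB' := all_n WB' HB'.
have Hsz : size A + size B = size A' + size B'.
  have := permP Hp (pred1 n); have := permP Hp' (pred1 n); rewrite (permP Huv) => ->.
  rewrite EA EB EA' EB' !count_cat !count_nseq /= eqxx !mul1n.
  rewrite (count_Pk _ F2) F3.
  have F0 : forall x, (false : nat) * x = 0 by [].
  rewrite !F0 !add0n !size_nseq => ->; by [].
have WM : word_n n M.
  rewrite /M word_cat WP; apply/allP => z; rewrite mem_nseq => /andP[_ /eqP ->]; by rewrite H1 H2.
have Hcyc : cyc n (P ++ w) (P ++ w').
  have Hc1 : forall X Y, plac_eq n (P ++ w) X -> plac_eq n (P ++ w') Y -> cyc n X Y -> cyc n (P ++ w) (P ++ w').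
    move=> X Y HX HY; apply: cyc_plac => //; exact: plac_sym.
  rewrite EA EB in Hpl; rewrite EA' EB' in Hpl'.
  have HM : forall s t, s ++ P ++ nseq (count_mem n.-1 w) n.-1 ++ t = s ++ M ++ t by move=> s t; rewrite /M -catA.
  rewrite HM in Hpl; rewrite HM in Hpl'.
  apply: Hc1 Hpl Hpl' _.
  case: (leqP (size A') (size A)) => Hle.
    have -> : size A = (size A - size A') + size A' by rewrite subnK.
    rewrite (arith1 Hsz Hle); exact: cyc_n.
  apply: cyc_sym.
  have -> : size A' = (size A' - size A) + size A by rewrite subnK // ltnW.
  rewrite (arith1 (esym Hsz) (ltnW Hle)); exact: cyc_n.
have R1 : reach n (n - 2).+1 u (P ++ w').
  right; exists (P ++ w); split; first by rewrite word_cat WP Ww.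
  by split.
have R2 : reach n (n - 2) (P ++ w') v by apply: reach_sym => //; rewrite word_cat WP Ww'.
have := reach_trans R1 R2.
by rewrite F4.
Qed.

End S.

Definition fD (n : nat) (w : seq nat) : nat :=
  \sum_(1 <= i < n) (index i.+1 w < index i w : nat).

Lemma swap_cmp (s1 s2 : seq nat) (a c i : nat) : ~~ ((a == i) && (c == i.+1)) -> ~~ ((c == i) && (a == i.+1)) ->
  (index i.+1 (s1 ++ a :: c :: s2) < index i (s1 ++ a :: c :: s2)) =
  (index i.+1 (s1 ++ c :: a :: s2) < index i (s1 ++ c :: a :: s2)).
Proof.
move=> H1 H2; rewrite !index_cat /=.
set k := size s1; set p := index i s1; set q := index i.+1 s1.
have B2 : (p < k) = (i \in s1) by rewrite /p /k index_mem.
have B1 : (q < k) = (i.+1 \in s1) by rewrite /q /k index_mem.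
case: (i \in s1) B2; case: (i.+1 \in s1) B1 => B1 B2;
move: H1 H2; do !case: eqP => //=; move=> *; apply/idP/idP; lia.
Qed.

Lemma tele (g : nat -> bool) a b : a <= b ->
  \sum_(a <= i < b) (g i && ~~ g i.+1 : nat) + g b = \sum_(a <= i < b) (~~ g i && g i.+1 : nat) + g a.
Proof.
elim: b => [|b IH]; first by rewrite leqn0 => /eqP ->; rewrite !big_geq.
rewrite leq_eqVlt => /orP[/eqP ->|Hab]; first by rewrite !big_geq.
rewrite !big_nat_recr //= -!addnA.
have := IH Hab; case: (g b); case: (g b.+1) => /=; lia.
Qed.

Section S.
Variable n : nat.

Lemma F_knuth u v : knuth_step n u v -> uniq u -> fD n u = fD n v.
Proof.
move=> [x [y [a [b [c [_ [_ [_ H]]]]]]]].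
case: H => [[Hab [-> ->]]|[Hab [-> ->]]] U; apply: eq_big_nat => i _; congr nat_of_bool.
- rewrite cat_uniq in U; move: U => /and3P[_ _]; rewrite cat_uniq => /andP[/= U _].
  move: U; rewrite !inE => /andP[/norP[Hac Hab'] _].
  have Hlt : a < b by rewrite ltn_neqAle Hab' andTb; case/andP: Hab.
  have E : forall s, x ++ [:: a; c; b] ++ s = x ++ [:: a, c & b :: s] by [].
  have E' : forall s, x ++ [:: c; a; b] ++ s = x ++ [:: c, a & b :: s] by [].
  apply: (@swap_cmp x (b :: y) a c i); apply/negP; case/andP => /eqP E1 /eqP E2; lia.
- have E : forall s, x ++ [:: b; a; c] ++ s = (x ++ [:: b]) ++ [:: a, c & s] by move=> s; rewrite -catA.
  have E2 : forall s, x ++ [:: b; c; a] ++ s = (x ++ [:: b]) ++ [:: c, a & s] by move=> s; rewrite -catA.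
  rewrite cat_uniq in U; move: U => /and3P[_ _]; rewrite cat_uniq => /andP[/= U _].
  move: U; rewrite !inE => /andP[/norP[Hba Hbc] _].
  have Hlt : b < c by rewrite ltn_neqAle Hbc; case/andP: Hab.
  rewrite E E2; apply: (@swap_cmp (x ++ [:: b]) y a c i); apply/negP; case/andP => /eqP Q1 /eqP Q2; lia.
Qed.

Lemma F_plac u v : plac_eq n u v -> uniq u -> fD n u = fD n v.
Proof.
elim=> {u v}.
- exact: F_knuth.
- by [].
- move=> u v H IH U; rewrite IH //; by rewrite (perm_uniq (plac_perm H)).
- move=> u v w H1 IH1 H2 IH2 U; rewrite IH1 // IH2 //; by rewrite -(perm_uniq (plac_perm H1)).
Qed.

Lemma term_id x y i : uniq (x ++ y) -> i \in x ++ y -> i.+1 \in x ++ y ->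
  (index i.+1 (y ++ x) < index i (y ++ x) : nat) + (~~ (i \in x) && (i.+1 \in x) : nat) =
  (index i.+1 (x ++ y) < index i (x ++ y) : nat) + ((i \in x) && ~~ (i.+1 \in x) : nat).
Proof.
rewrite cat_uniq => /and3P[_ Hd _] Hi Hi1.
have Dis : forall p, p \in x -> p \in y = false.
  move=> p Hp; apply/negP => Hy; move/hasP: Hd; apply; by exists p.
rewrite !index_cat.
have := index_mem i x; have := index_mem i.+1 x; have := index_mem i y; have := index_mem i.+1 y.
move: Hi Hi1; rewrite !mem_cat.
case Ex: (i \in x); case Ex1: (i.+1 \in x); rewrite ?(Dis _ Ex) ?(Dis _ Ex1) /=;
  try (case: (i \in y)); try (case: (i.+1 \in y)); move=> //= *; lia.
Qed.

Lemma F_cyc_words x y : uniq (x ++ y) -> (forall i, 0 < i <= n -> i \in x ++ y) ->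
  fD n (y ++ x) <= fD n (x ++ y) + 1.
Proof.
move=> U Hm.
case: n Hm => [|m] Hm; first by rewrite /fD big_geq.
have E : fD m.+1 (y ++ x) + \sum_(1 <= i < m.+1) (~~ (i \in x) && (i.+1 \in x) : nat) =
         fD m.+1 (x ++ y) + \sum_(1 <= i < m.+1) ((i \in x) && ~~ (i.+1 \in x) : nat).
  rewrite /fD -!big_split /=; apply: eq_big_nat => i /andP[H1 H2].
  apply: term_id => //; apply: Hm; lia.
have T := tele (fun i => i \in x) (isT : 1 <= m.+1).
move: E T; case: (1 \in x); case: (m.+1 \in x) => /=; lia.
Qed.

Lemma F_cyc u v : cyc n u v -> perm_eq u (iota 1 n) -> fD n v <= fD n u + 1.
Proof.
move=> [x [y [_ [_ [H1 H2]]]]] Hp.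
have Pu := plac_perm H1; have Pv := plac_perm H2.
have Ux : uniq (x ++ y) by rewrite -(perm_uniq Pu) (perm_uniq Hp) iota_uniq.
have Uy : uniq (y ++ x) by rewrite -(perm_uniq (_ : perm_eq (x ++ y) (y ++ x))) // perm_catC.
rewrite (F_plac H1) ?(perm_uniq Hp) ?iota_uniq // (F_plac H2); last by rewrite (perm_uniq Pv).
apply: F_cyc_words => // i Hi.
by rewrite -(perm_mem Pu) (perm_mem Hp) mem_iota add1n ltnS.
Qed.

Lemma F_reach d u v : reach n d u v -> perm_eq u (iota 1 n) -> fD n v <= fD n u + d.
Proof.
elim: d v => [|d IH] v /= H Hp.
  rewrite (F_plac H) ?addn0 // (perm_uniq Hp) iota_uniq //.
case: H => [H|[z [Wz [H1 H2]]]]; first by have := IH _ H Hp; lia.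
have Hzu : perm_eq z u by rewrite perm_sym; exact: reach_perm H1.
have Hz := perm_trans Hzu Hp.
have := IH _ H1 Hp; have := F_cyc H2 Hz; lia.
Qed.

Lemma idx_row j : 0 < j <= n -> index j (iota 1 n) = j.-1.
Proof.
move=> /andP[H1 H2].
have Hlt : j.-1 < size (iota 1 n) by rewrite size_iota; lia.
have := index_uniq 0 Hlt (iota_uniq 1 n); rewrite nth_iota; last by rewrite size_iota in Hlt.
by rewrite add1n prednK.
Qed.

Lemma idx_col j : 0 < j <= n -> index j (rev (iota 1 n)) = n - j.
Proof.
move=> /andP[H1 H2].
have Hlt : n - j < size (rev (iota 1 n)) by rewrite size_rev size_iota; lia.
have := index_uniq 0 Hlt; rewrite rev_uniq iota_uniq => /(_ isT).
rewrite nth_rev; last by rewrite size_rev in Hlt.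
rewrite size_iota nth_iota; last by lia.
by have -> : 1 + (n - (n - j).+1) = j by lia.
Qed.

Lemma f_row : fD n (iota 1 n) = 0.
Proof.
rewrite /fD big_nat_cond big1 // => i /andP[/andP[H1 H2] _].
rewrite !idx_row /=; try lia; by rewrite ltnNge leq_pred.
Qed.

Lemma f_col : fD n (rev (iota 1 n)) = n - 1.
Proof.
rewrite /fD (eq_big_nat _ _ (F2 := fun _ => 1)); first by rewrite sum_nat_const_nat muln1.
move=> i /andP[H1 H2]; rewrite !idx_col; try lia.
Qed.

End S.

Lemma ex_min (P : nat -> Prop) k : P k -> exists d, P d /\ forall d', P d' -> d <= d'.
Proof.
have : k <= k by [].
move: {-2}k; elim: k => [|b IH] k Hk Pk.
  exists k; split => // d' _; by move: Hk; rewrite leqn0 => /eqP ->.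
case: (classic (exists j, j < k /\ P j)) => [[j [Hj Pj]]|NE].
  apply: (IH j) => //; move: Hj Hk; lia.
exists k; split => // d' Pd'; rewrite leqNgt; apply/negP => Hlt; apply: NE; by exists d'.
Qed.

Lemma ex_max (P : nat -> Prop) a B : P a -> (forall x, P x -> x <= B) ->
  exists K, P K /\ forall x, P x -> x <= K.
Proof.
elim: B => [|B IH] Pa HB.
  exists a; split => // x /HB; have := HB a Pa; rewrite !leqn0 => /eqP -> /eqP ->; by [].
case: (classic (P B.+1)) => [PB|NB]; first by exists B.+1.
apply: IH => // x Px; have := HB x Px; rewrite leq_eqVlt => /orP[/eqP E|//].
by rewrite E in Px.
Qed.

Theorem mainTheorem2 (n : nat) (hn : 2 <= n) :
  exists k : nat, max_comp_diameter n k /\ n - 1 <= k /\ k <= 2 * n - 3.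
Proof.
set Bd := 2 * n - 3.
have distB : forall v w, word_n n v -> word_n n w -> perm_eq v w ->
    exists d, dist n v w d /\ d <= Bd.
  move=> v w Wv Ww Hp.
  have [d [Rd Hd]] := @ex_min (fun d => reach n d v w) _ (upper hn Wv Ww Hp).
  exists d; split; first by split.
  exact: Hd (upper hn Wv Ww Hp).
have dist_le : forall v w d, word_n n v -> word_n n w -> perm_eq v w -> dist n v w d -> d <= Bd.
  move=> v w d Wv Ww Hp [_ H]; exact: H (upper hn Wv Ww Hp).
have comp_ex : forall u, word_n n u -> exists D, comp_diameter n u D.
  move=> u Wu.
  pose Pu D := exists v w, word_n n v /\ word_n n w /\ connected n u v /\ connected n u w /\
    dist n v w D.
  have P0 : Pu 0.
    exists u, u; split => //; split => //; split; first exact: rt_refl.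
    split; first exact: rt_refl.
    split; first exact: plac_refl.
    by [].
  have PB : forall D, Pu D -> D <= Bd.
    move=> D [v [w [Wv [Ww [Cv [Cw Hd]]]]]]; apply: dist_le Wv Ww _ Hd.
    apply: perm_trans (conn_perm Cw); rewrite perm_sym; exact: conn_perm Cv.
  have [D [PD HD]] := ex_max P0 PB.
  exists D; split; last by [].
  move=> v w Wv Ww Cv Cw.
  have Hp : perm_eq v w.
    apply: perm_trans (conn_perm Cw); rewrite perm_sym; exact: conn_perm Cv.
  have [d [Hd _]] := distB v w Wv Ww Hp.
  exists d; split => //; apply: HD; by exists v, w.
pose Q K := exists u, word_n n u /\ comp_diameter n u K.
have Q0 : exists a, Q a.
  have [D HD] := comp_ex [::] isT; by exists D, [::].
have QB : forall K, Q K -> K <= Bd.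
  move=> K [u [Wu [_ [v [w [Wv [Ww [Cv [Cw Hd]]]]]]]]]; apply: dist_le Wv Ww _ Hd.
  apply: perm_trans (conn_perm Cw); rewrite perm_sym; exact: conn_perm Cv.
have [a Qa] := Q0.
have [K [QK HK]] := ex_max Qa QB.
exists K.
have MC : max_comp_diameter n K.
  split; first exact: comp_ex.
  split; last by [].
  move=> u D Wu HD; apply: HK; by exists u.
split => //; split; last exact: QB.
set row := iota 1 n; set col := rev (iota 1 n).
have Wrow : word_n n row by apply/allP => z; rewrite mem_iota; lia.
have Wcol : word_n n col by rewrite /word_n all_rev.
have Prc : perm_eq row col by rewrite perm_sym /col perm_rev.
have [D0 HD0] := comp_ex row Wrow.
have [[d [[Rd _] Hd]] _] : (exists d, dist n row col d /\ d <= D0) /\ True.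
  split => //; apply: (proj1 HD0) => //; first exact: rt_refl.
  exact: reach_conn Wrow (upper hn Wrow Wcol Prc).
have := F_reach Rd (perm_refl _).
rewrite f_row f_col add0n => Hnd.
apply: leq_trans Hnd (leq_trans Hd _).
apply: HK; by exists row.
Qed.
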